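(* Let $p<q$ be coprime positive integers and $m$ a positive integer. Let $A=\mathbb C[X_0,\dots,X_4]$, graded by $\mathbb Z\times\mathbb Z/m\mathbb Z$ with $X_0$ of degree $(1,0)$, $X_1,X_2$ of degree $(-p,-1)$, $X_3,X_4$ of degree $(q,1)$, and for $s\in\mathbb C$ let $I_s=(X_0^{q-p}-X_1X_4,\;X_2,\;X_3,\;s-X_0^{mp}X_1^{m})$. Then $\dim(A/I_1)_{(n,d)}\ge 1$ and $\dim(A/I_0)_{(n,d)}\ge 1$ for all $(n,d)\in\mathbb Z\times\mathbb Z/m\mathbb Z$.
   Context: The grading is the weight grading for the action of $G_0\times G_m$ ($G_0\cong\mathbb C^*$, $G_m\cong\mu_m$) on $\mathbb C^5$ given by $t\cdot(x_0,\dots,x_4)=(tx_0,t^{-p}x_1,t^{-p}x_2,t^qx_3,t^qx_4)$ and $\zeta\cdot(x_0,\dots,x_4)=(x_0,\zeta^{-1}x_1,\zeta^{-1}x_2,\zeta x_3,\zeta x_4)$. *)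

(* Defs.v *)
(* multivariate polynomials (multinomials) over C = R[i],
   R an arbitrary realType (a complete archimedean field, i.e. the reals). *)
From HB Require Import structures.
From mathcomp Require Import all_boot all_order all_algebra.
From mathcomp Require Import reals complex.
From mathcomp Require Import mpoly.
Set Implicit Arguments. Unset Strict Implicit. Unset Printing Implicit Defensive.
Import Order.TTheory GRing.Theory Num.Theory.
Local Open Scope ring_scope.

Definition Apoly (R : realType) := {mpoly R[i][5]}.

Definition degZ (p q : nat) (mon : 'X_{1..5}) : int :=
  (mon (inord 0))%:Z - (p * (mon (inord 1) + mon (inord 2)))%:Z
  + (q * (mon (inord 3) + mon (inord 4)))%:Z.

(* Representative in Z of the Z/mZ-component of the degree:
   X_0 -> 0, X_1,X_2 -> -1, X_3,X_4 -> 1. *)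
Definition degM (mon : 'X_{1..5}) : int :=
  (mon (inord 3) + mon (inord 4))%:Z - (mon (inord 1) + mon (inord 2))%:Z.

Definition homog_of (R : realType) (p q m : nat) (n d : int) (f : Apoly R) : Prop :=
  forall mon : 'X_{1..5}, mon \in msupp f ->
    degZ p q mon = n /\ (degM mon = d %[mod m%:Z])%Z.

Definition in_ideal (R : realType) (gens : seq (Apoly R)) (f : Apoly R) : Prop :=
  exists c : seq (Apoly R), size c = size gens /\
    f = \sum_(i < size gens) c`_i * gens`_i.

Definition Igens (R : realType) (p q m : nat) (s : R[i]) : seq (Apoly R) :=
  [:: 'X_(inord 0) ^+ (q - p) - 'X_(inord 1) * 'X_(inord 4);
      'X_(inord 2); 'X_(inord 3);
      s%:MP - 'X_(inord 0) ^+ (m * p) * 'X_(inord 1) ^+ m].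

(* dim (A/I)_{(n,d)} >= 1 : since I is homogeneous, (A/I)_{(n,d)} =
   A_{(n,d)} / (I cap A_{(n,d)}); it is nonzero iff some element of A_{(n,d)}
   is not in I. *)
Definition graded_piece_nonzero (R : realType) (p q m : nat) (s : R[i]) (n d : int) : Prop :=
  exists f : Apoly R, homog_of p q m n d f /\ ~ in_ideal (Igens p q m s) f.

(* Main.v *)
Require Import Defs.
From HB Require Import structures.
From mathcomp Require Import all_boot all_order all_algebra.
From mathcomp Require Import reals complex.
From mathcomp Require Import mpoly.
From mathcomp Require Import zify ring lra.
Set Implicit Arguments. Unset Strict Implicit. Unset Printing Implicit Defensive.
Import Order.TTheory GRing.Theory Num.Theory.
Local Open Scope ring_scope.


Lemma shift_ex (x D : int) : 0 < D -> exists k : int, 0 <= x + D * k /\ x + D * k < D.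
Proof.
move=> D0; exists (- divz x D).
have E : x + D * - divz x D = modz x D by rewrite {1}(divz_eq x D); ring.
rewrite E; split; [apply: modz_ge0; lia | exact: ltz_pmod].
Qed.

Lemma res_ex (d m : int) : 0 < m -> exists r j : int, 0 <= r /\ r < m /\ d = r + j * m.
Proof.
move=> m0; exists (modz d m), (divz d m); split; first by apply: modz_ge0; lia.
split; first exact: ltz_pmod.
by rewrite {1}(divz_eq d m) addrC.
Qed.

Lemma arith_mon (p q m : nat) (n d : int) : (0 < p)%N -> (p < q)%N -> (0 < m)%N ->
  exists a b c : nat,
    (a%:Z - (p * (b + 0))%:Z + (q * (0 + c))%:Z = n) /\
    (exists j : int, (0 + c)%:Z - (b + 0)%:Z = d + j * m%:Z) /\
    ((a + (q - p) * c < m * p)%N \/ (a + (q - p) * b < m * q)%N).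
Proof.
move=> p0 pq m0.
have m0' : 0 < m%:Z by lia.
case: (lerP n 0) => hn.
- have [r [j [r0 [rm hd]]]] := @res_ex (- d) m%:Z m0'.
  have [k [k0 k1]] := @shift_ex (n + p%:Z * r) (p * m)%:Z ltac:(nia).
  have kp : 0 <= k by nia.
  exists (absz (n + p%:Z * r + (p * m)%:Z * k)), (absz (r + m%:Z * k)%R), 0%N.
  split; first by nia.
  split; first by exists (j - k); nia.
  by left; nia.
- have [r [j [r0 [rm hd]]]] := @res_ex d m%:Z m0'.
  have [k [k0 k1]] := @shift_ex (n - q%:Z * r) (q * m)%:Z ltac:(nia).
  case: (lerP 0 (r - m%:Z * k)) => ht.
  + exists (absz (n - q%:Z * r + (q * m)%:Z * k)%R), 0%N, (absz (r - m%:Z * k)%R).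
    split; first by nia.
    split; first by exists (- j - k); nia.
    by right; nia.
  + exists (absz (n - p%:Z * (r - m%:Z * k))%R), (absz (- (r - m%:Z * k))%R), 0%N.
    split; first by nia.
    split; first by exists (- j - k); nia.
    by right; nia.
Qed.


Section P.
Variable R : realType.
Local Notation C := (R[i]).

Definition mon (a b c : nat) : 'X_{1..5} :=
  [multinom (if nat_of_ord i == 0 then a else if nat_of_ord i == 1 then b else if nat_of_ord i == 4 then c else 0)%N | i < 5].

Definition hv (x0 x1 x4 : {poly C}) (i : 'I_5) : {poly C} :=
  if nat_of_ord i == 0 then x0 else if nat_of_ord i == 1 then x1 else if nat_of_ord i == 4 then x4 else 0.

Lemma mmapXi (h : 'I_5 -> {poly C}) (j : 'I_5) :
  mmap (@polyC C) h ('X_j : {mpoly C[5]}) = h j.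
Proof. by rewrite mmapX mmap1U. Qed.

Lemma phi_mon x0 x1 x4 a b c :
  mmap (@polyC C) (hv x0 x1 x4) ('X_[mon a b c] : Apoly R) = x0 ^+ a * x1 ^+ b * x4 ^+ c.
Proof.
rewrite mmapX /mmap1 !big_ord_recl big_ord0 !mnmE /hv /=.
by rewrite !expr0 !mul1r !mulr1 mulrA.
Qed.

Lemma not_in0 (h : 'I_5 -> {poly C}) (gens : seq (Apoly R)) f N e :
  (e < N)%N -> mmap (@polyC C) h f = 'X^e ->
  (forall i, (i < size gens)%N -> exists k, mmap (@polyC C) h gens`_i = k * 'X^N) ->
  ~ in_ideal gens f.
Proof.
move=> eN hf hg [c [_ fE]].
have := congr1 (fun x : {poly C} => x`_e) (congr1 (mmap (@polyC C) h) fE).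
rewrite /= hf coefXn eqxx raddf_sum coef_sum big1 => [|i _]; first by move/eqP; rewrite oner_eq0.
change ((mmap (@polyC C) h (c`_i * gens`_i))`_e = 0). rewrite (mmap_is_multiplicative _ _).1. have [k ->] := hg i (ltn_ord i).
by rewrite mulrA coefMXn eN.
Qed.

Lemma hv0 x0 x1 x4 : hv x0 x1 x4 (inord 0) = x0.
Proof. by rewrite /hv inordK. Qed.
Lemma hv1 x0 x1 x4 : hv x0 x1 x4 (inord 1) = x1.
Proof. by rewrite /hv inordK. Qed.
Lemma hv2 x0 x1 x4 : hv x0 x1 x4 (inord 2) = 0.
Proof. by rewrite /hv inordK. Qed.
Lemma hv3 x0 x1 x4 : hv x0 x1 x4 (inord 3) = 0.
Proof. by rewrite /hv inordK. Qed.
Lemma hv4 x0 x1 x4 : hv x0 x1 x4 (inord 4) = x4.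
Proof. by rewrite /hv inordK. Qed.

Lemma gens_ok p q m (s : C) x0 x1 x4 N k :
  x0 ^+ (q - p) - x1 * x4 = 0 -> s%:P - x0 ^+ (m * p) * x1 ^+ m = k * 'X^N ->
  forall i, (i < size (Igens p q m s))%N ->
  exists k, mmap (@polyC C) (hv x0 x1 x4) (Igens p q m s)`_i = k * 'X^N.
Proof.
move=> h1 h2; case=> [|[|[|[|i]]]] //= _.
- exists 0; rewrite mul0r rmorphB rmorphM !rmorphXn /= !mmapXi hv0 hv1 hv4; exact: h1.
- by exists 0; rewrite mul0r mmapXi hv2.
- by exists 0; rewrite mul0r mmapXi hv3.
- exists k; rewrite rmorphB rmorphM !rmorphXn /= !mmapXi hv0 hv1 mmapC; exact: h2.
Qed.

Lemma notinI p q m (s : C) a b c x0 x1 x4 N k e :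
  x0 ^+ (q - p) - x1 * x4 = 0 -> s%:P - x0 ^+ (m * p) * x1 ^+ m = k * 'X^N ->
  x0 ^+ a * x1 ^+ b * x4 ^+ c = 'X^e -> (e < N)%N ->
  ~ in_ideal (Igens p q m s) 'X_[mon a b c].
Proof.
move=> h1 h2 h3 eN; apply: (@not_in0 (hv x0 x1 x4) _ _ N e eN).
  by rewrite phi_mon.
exact: gens_ok h1 h2.
Qed.


Lemma main_ex p q m (s : C) (n d : int) : (0 < p)%N -> (p < q)%N -> (0 < m)%N ->
  (s = 0 \/ s = 1) -> graded_piece_nonzero p q m s n d.
Proof.
move=> p0 pq m0 hs.
have [a [b [c [hZ [[j hM] hB]]]]] := arith_mon n d p0 pq m0.
exists 'X_[mon a b c]; split.
  move=> mn; rewrite msuppX inE => /eqP ->.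
  rewrite /degZ /degM !mnmE !inordK //=; split; first exact: hZ.
  by rewrite hM addrC modzMDl.
case: hs => ->.
- case: hB => hB.
  + apply: (@notinI p q m 0 a b c 'X 1 ('X^(q - p)) (m * p) (-1) (a + (q - p) * c)) => //.
    * by rewrite mul1r subrr.
    * by rewrite expr1n mulr1 sub0r mulN1r.
    * by rewrite expr1n mulr1 -exprM -exprD.
  + apply: (@notinI p q m 0 a b c 'X ('X^(q - p)) 1 (m * q) (-1) (a + (q - p) * b)) => //.
    * by rewrite mulr1 subrr.
    * rewrite sub0r mulN1r -exprM -exprD; congr (- 'X^_).
      by rewrite [((q - p) * m)%N]mulnC -mulnDr subnKC // ltnW.
    * by rewrite expr1n mulr1 -exprM -exprD.
- apply: (@notinI p q m 1 a b c 1 1 1 1 0 0) => //.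
  + by rewrite mulr1 expr1n subrr.
  + by rewrite !expr1n mulr1 subrr mul0r.
  + by rewrite !expr1n !mulr1 expr0.
Qed.

End P.

Theorem lemma4p6 (R : realType) (p q m : nat) :
  (0 < p)%N -> (p < q)%N -> coprime p q -> (0 < m)%N ->
  forall (n d : int),
    graded_piece_nonzero p q m (1 : R[i]) n d /\
    graded_piece_nonzero p q m (0 : R[i]) n d.
Proof.
move=> p0 pq _ m0 n d; split; apply: main_ex => //; by [right | left].
Qed.
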